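(* For $n\ge2$ and all $P,Q\in\Gamma_n$, $D_{J\Delta}(P\|Q)\le \frac23 D_{T\Delta}(P\|Q)$.
   Context: $\Gamma_n=\{P=(p_1,\dots,p_n): p_i>0,\ \sum p_i=1\}$. $\Delta(P\|Q)=\sum_{i=1}^n\frac{(p_i-q_i)^2}{p_i+q_i}$; $J(P\|Q)=\sum_{i=1}^n(p_i-q_i)\ln\frac{p_i}{q_i}$; $T(P\|Q)=\sum_{i=1}^n\frac{p_i+q_i}{2}\ln\frac{p_i+q_i}{2\sqrt{p_iq_i}}$. $D_{J\Delta}=\frac18J-\frac14\Delta$, $D_{T\Delta}=T-\frac14\Delta$. *)

(* Defs.v *)
From Stdlib Require Import Reals.
Open Scope R_scope.

Fixpoint fsum (n : nat) (f : nat -> R) : R :=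
  match n with
  | O => 0
  | S m => fsum m f + f m
  end.

Definition Gamma (n : nat) (P : nat -> R) : Prop :=
  (forall i, (i < n)%nat -> 0 < P i) /\ fsum n P = 1.

Definition Delta (n : nat) (P Q : nat -> R) : R :=
  fsum n (fun i => (P i - Q i) ^ 2 / (P i + Q i)).

Definition Jdiv (n : nat) (P Q : nat -> R) : R :=
  fsum n (fun i => (P i - Q i) * ln (P i / Q i)).

Definition Tdiv (n : nat) (P Q : nat -> R) : R :=
  fsum n (fun i => (P i + Q i) / 2 * ln ((P i + Q i) / (2 * sqrt (P i * Q i)))).

Definition D_JDelta (n : nat) (P Q : nat -> R) : R :=
  / 8 * Jdiv n P Q - / 4 * Delta n P Q.

Definition D_TDelta (n : nat) (P Q : nat -> R) : R :=
  Tdiv n P Q - / 4 * Delta n P Q.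

(* Main.v *)
Require Import Defs.
From Stdlib Require Import Reals.
Open Scope R_scope.
From Stdlib Require Import Lra Lia Psatz.
From Coquelicot Require Import Coquelicot.

Lemma incr0 (f f' : R -> R) (b : R) : 0 <= b < 1 ->
  (forall c, 0 <= c < 1 -> is_derive f c (f' c)) ->
  (forall c, 0 <= c < 1 -> 0 <= f' c) -> f 0 <= f b.
Proof.
  intros Hb Hd Hp. destruct (Req_dec b 0) as [->|Hb0]; [lra|].
  destruct (MVT_cor2 f f' 0 b) as [c [Hc1 Hc2]]; [lra| |].
  - intros c Hc. apply is_derive_Reals. apply Hd. lra.
  - assert (0 <= f' c) by (apply Hp; lra). nra.
Qed.

Definition Gf (u : R) := 2*u/3 + u/(3*(1-u^2)) - (ln(1+u) - ln(1-u))/2.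
Definition Ff (u : R) := -(ln(1+u)+ln(1-u))/3 + u^2/6 - u*(ln(1+u)-ln(1-u))/4.

Lemma Gd c : 0 <= c < 1 -> is_derive Gf c (2*c^4/(3*(1-c^2)^2)).
Proof.
  intros Hc. unfold Gf. assert (1 - c^2 <> 0) by nra.
  auto_derive.
  - repeat split; try nra; lra.
  - field. repeat split; try nra; lra.
Qed.

Lemma G_nonneg b : 0 <= b < 1 -> 0 <= Gf b.
Proof.
  intros Hb. replace 0 with (Gf 0).
  - apply (incr0 Gf _ b Hb Gd). intros c Hc.
    apply Rmult_le_pos; [nra|]. apply Rlt_le, Rinv_0_lt_compat.
    assert (0 < 1 - c^2) by nra. nra.
  - unfold Gf. rewrite !Rplus_0_r, Rminus_0_r, ln_1. field.
Qed.

Lemma Fd c : 0 <= c < 1 -> is_derive Ff c (Gf c / 2).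
Proof.
  intros Hc. unfold Ff, Gf. assert (1 - c^2 <> 0) by nra.
  auto_derive.
  - repeat split; try nra; lra.
  - unfold Rminus. field. repeat split; try nra; lra.
Qed.

Lemma F_nonneg b : 0 <= b < 1 -> 0 <= Ff b.
Proof.
  intros Hb. replace 0 with (Ff 0).
  - apply (incr0 Ff _ b Hb Fd). intros c Hc. pose proof (G_nonneg c Hc). lra.
  - unfold Ff. rewrite !Rplus_0_r, Rminus_0_r, ln_1. field.
Qed.

Lemma sqrt_ln x : 0 < x -> ln (sqrt x) = ln x / 2.
Proof.
  intros Hx. assert (Hs : 0 < sqrt x) by (apply sqrt_lt_R0; lra).
  rewrite <- (sqrt_sqrt x) at 2 by lra. rewrite ln_mult by lra. lra.
Qed.

Lemma term_ge p q : 0 < q <= p ->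
  / 8 * ((p - q) * ln (p / q)) - / 4 * ((p - q) ^ 2 / (p + q)) <=
  2 / 3 * ((p + q) / 2 * ln ((p + q) / (2 * sqrt (p * q))) - / 4 * ((p - q) ^ 2 / (p + q))).
Proof.
  intros Hpq. set (s := p + q). set (u := (p - q) / s).
  assert (Hs : 0 < s) by (unfold s; lra).
  assert (Hu : 0 <= u < 1).
  { unfold u. split. apply Rmult_le_pos; [lra|]. apply Rlt_le, Rinv_0_lt_compat; lra.
    apply Rmult_lt_reg_r with s; auto. unfold Rdiv. rewrite Rmult_assoc, Rinv_l by lra. unfold s. lra. }
    assert (H1 : 1 + u = 2 * p / s) by (unfold u, s; field; lra).
  assert (H2 : 1 - u = 2 * q / s) by (unfold u, s; field; lra).
  assert (HF := F_nonneg u Hu). unfold Ff in HF.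
  rewrite H1, H2 in HF.
  rewrite !ln_div, !ln_mult in HF by lra.
  assert (Hsq : 0 < sqrt (p * q)) by (apply sqrt_lt_R0; nra).
  rewrite ln_div, ln_div, ln_mult, sqrt_ln, ln_mult by nra.
  fold s. assert (Hud : p - q = s * u) by (unfold u, s; field; lra). clearbody u s.
  replace ((p - q) ^ 2 / s) with (s * u ^ 2) by (rewrite Hud; field; lra).
  replace (p - q) with (s * u) by lra.
  assert (HH := Rmult_le_pos _ _ (Rlt_le _ _ Hs) HF).
  nra.
Qed.

Lemma term_all p q : 0 < p -> 0 < q ->
  / 8 * ((p - q) * ln (p / q)) - / 4 * ((p - q) ^ 2 / (p + q)) <=
  2 / 3 * ((p + q) / 2 * ln ((p + q) / (2 * sqrt (p * q))) - / 4 * ((p - q) ^ 2 / (p + q))).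
Proof.
  intros Hp Hq. destruct (Rle_dec q p) as [H|H]. apply term_ge; lra.
  pose proof (term_ge q p ltac:(lra)) as T.
  rewrite (Rplus_comm q p), (Rmult_comm q p) in T.
  replace ((q - p) ^ 2) with ((p - q) ^ 2) in T by ring.
  rewrite ln_div in T by lra. rewrite ln_div by lra.
  nra.
Qed.

Lemma main_aux (n : nat) (P Q : nat -> R) :
  (forall i, (i < n)%nat -> 0 < P i) -> (forall i, (i < n)%nat -> 0 < Q i) ->
  D_JDelta n P Q <= 2 / 3 * D_TDelta n P Q.
Proof.
  induction n as [|n IH]; intros HP HQ.
  - unfold D_JDelta, D_TDelta, Jdiv, Defs.Delta, Tdiv; cbn [fsum]; lra.
  - assert (IH' : D_JDelta n P Q <= 2 / 3 * D_TDelta n P Q)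
      by (apply IH; intros; [apply HP|apply HQ]; lia).
    assert (Tm := term_all (P n) (Q n) (HP n (Nat.lt_succ_diag_r n)) (HQ n (Nat.lt_succ_diag_r n))).
    unfold D_JDelta, D_TDelta, Jdiv, Defs.Delta, Tdiv in *; cbn [fsum]. lra.
Qed.

Theorem proposition5p5 (n : nat) (P Q : nat -> R) :
  (2 <= n)%nat -> Gamma n P -> Gamma n Q ->
  D_JDelta n P Q <= 2 / 3 * D_TDelta n P Q.
Proof.
  intros _ [HP _] [HQ _]. now apply main_aux.
Qed.
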